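(* For every word $x\in\{a,b\}^*$ there is a 2-state MCQFA (with complex amplitudes) over $\{a,b\}$ that accepts $x$ with probability $0$ and accepts every word $y\in\{a,b\}^*$ with $y\neq x$ with nonzero probability; i.e. the complement of the singleton language $\{x\}$ is recognized by a 2-state nondeterministic MCQFA.
   Context: A 2-state Moore–Crutchfield quantum finite automaton (MCQFA) over $\{a,b\}$ consists of unitaries $U_a,U_b\in\mathbb{C}^{2\times 2}$, an initial unit vector $|u_0\rangle\in\mathbb{C}^2$ and a set of accepting basis states; on input $w=w_1\cdots w_k$ the final state is $U_{w_k}\cdots U_{w_1}|u_0\rangle$ and the acceptance probability is the sum of the squared moduli of its accepting coordinates. A language $L$ is recognized by a nondeterministic MCQFA if words in $L$ are accepted with nonzero probability and words not in $L$ with probability $0$. *)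

(* Defs.v *)
From HB Require Import structures.
From mathcomp Require Import all_boot all_order all_algebra.
Set Implicit Arguments. Unset Strict Implicit. Unset Printing Implicit Defensive.
Import Order.TTheory GRing.Theory Num.Theory.
Local Open Scope ring_scope.

(* Alphabet {a,b}: false = a, true = b. Words are seq bool. *)
Definition letter := bool.

Section MCQFA.
Variable C : numClosedFieldType.

Definition adjmx (n : nat) (A : 'M[C]_n) : 'M[C]_n := \matrix_(i, j) (A j i)^*.

Definition unitarymx (n : nat) (U : 'M[C]_n) : Prop := U *m adjmx U = 1%:M.

Record mcqfa2 := MCQFA2 {
  Ua : 'M[C]_2;
  Ub : 'M[C]_2;
  u0 : 'cV[C]_2;
  acc : {set 'I_2}
}.

Definition wf_mcqfa2 (M : mcqfa2) : Prop :=
  [/\ unitarymx (Ua M), unitarymx (Ub M) & \sum_(i < 2) `|u0 M i 0| ^+ 2 = 1].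

Definition letter_mx (M : mcqfa2) (c : letter) : 'M[C]_2 :=
  if c then Ub M else Ua M.

(* final state U_{w_k} ... U_{w_1} u0 : letters applied left to right *)
Definition final_state (M : mcqfa2) (w : seq letter) : 'cV[C]_2 :=
  foldl (fun v c => letter_mx M c *m v) (u0 M) w.

Definition acc_prob (M : mcqfa2) (w : seq letter) : C :=
  \sum_(i in acc M) `|final_state M w i 0| ^+ 2.

Definition nd_recognizes (M : mcqfa2) (L : seq letter -> Prop) : Prop :=
  forall w, (L w -> acc_prob M w != 0) /\ (~ L w -> acc_prob M w = 0).

End MCQFA.

(* Main.v *)
Require Import Defs.
From HB Require Import structures.
From mathcomp Require Import all_boot all_order all_algebra.
From mathcomp Require Import ring.
Import Order.TTheory GRing.Theory Num.Theory.
Local Open Scope ring_scope.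

Definition G := (int * int)%type.
Definition gmul (u v : G) : G := (u.1*v.1 - u.2*v.2, u.1*v.2 + u.2*v.1).
Definition gsub (u v : G) : G := (u.1 - v.1, u.2 - v.2).
Definition crossG (u v : G * G) : G := gsub (gmul u.1 v.2) (gmul u.2 v.1).
Definition stepG (l : bool) (u : G * G) : G * G :=
  if l then
    ((3*u.1.1 - 4*u.2.2, 3*u.1.2 + 4*u.2.1), (3*u.2.1 - 4*u.1.2, 4*u.1.1 + 3*u.2.2))
  else
    ((3*u.1.1 - 4*u.2.1, 3*u.1.2 - 4*u.2.2), (4*u.1.1 + 3*u.2.1, 4*u.1.2 + 3*u.2.2)).
Definition gw (y : seq bool) : G * G := foldl (fun u l => stepG l u) ((1,0),(0,0)) y.

Lemma cross_step l u v :
  crossG (stepG l u) (stepG l v) = (25 * (crossG u v).1, 25 * (crossG u v).2).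
Proof. by case: l; rewrite /crossG /gmul /gsub /=; congr pair; ring. Qed.

Definition F := 'F_5.
Definition t : F := 3.
Lemma tt1 : t * t + 1 = 0. Proof. by apply/eqP; vm_compute. Qed.
Definition red (u : G) : F := u.1%:~R + t * u.2%:~R.

Lemma red_cross u v :
  red (crossG u v) = red u.1 * red v.2 - red u.2 * red v.1.
Proof.
rewrite /red /crossG /gmul /gsub /=.
rewrite !(intrD, intrB, intrM).
apply/eqP; rewrite -subr_eq0; apply/eqP.
set a := u.1.1%:~R; set b := u.1.2%:~R; set c := u.2.1%:~R; set d := u.2.2%:~R.
set e := v.1.1%:~R; set f := v.1.2%:~R; set g := v.2.1%:~R; set h := v.2.2%:~R.
transitivity ((t*t+1) * (- b*h + d * f)); last by rewrite tt1 mul0r.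
ring.
Qed.

Definition stepF (l : bool) (r : F * F) : F * F :=
  if l then (3 * r.1 + 4 * t * r.2, 4 * t * r.1 + 3 * r.2)
  else (3 * r.1 - 4 * r.2, 4 * r.1 + 3 * r.2).

Definition rv (u : G * G) : F * F := (red u.1, red u.2).

Lemma rv_step l u : rv (stepG l u) = stepF l (rv u).
Proof.
rewrite /rv /stepF /red; case: l => /=; rewrite !(intrD, intrB, intrM).
  congr pair; apply/eqP; rewrite -subr_eq0; apply/eqP.
    transitivity ((t*t+1) * (-4 * u.2.2%:~R)); last by rewrite tt1 mul0r.
    ring.
  transitivity ((t*t+1) * (-4 * u.1.2%:~R)); last by rewrite tt1 mul0r.
  ring.
by congr pair; ring.
Qed.

Definition shp (o : option bool) (r : F * F) : bool :=
  match o with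
  | None => (r.1 == 1) && (r.2 == 0)
  | Some false => (r.1 != 0) && (r.2 == 3 * r.1)
  | Some true => (r.1 != 0) && (r.2 == 4 * r.1)
  end.

Lemma shape_step o l r : shp o r -> shp (Some l) (stepF l r).
Proof.
case: r => x y.
case: o => [o|]; case: l; try case: o;
case: x => [[|[|[|[|[|n]]]]] Hn]; case: y => [[|[|[|[|[|m]]]]] Hm]; try by vm_compute.
Qed.

Lemma shape_cross o o' r s : o != o' -> shp o r -> shp o' s ->
  r.1 * s.2 - r.2 * s.1 != 0.
Proof.
case: r => x y; case: s => x' y'.
case: o => [o|]; case: o' => [o'|]; try case: o; try case: o'; try by [];
case: x => [[|[|[|[|[|n]]]]] Hn]; case: y => [[|[|[|[|[|m]]]]] Hm]; try by vm_compute;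
case: x' => [[|[|[|[|[|n']]]]] Hn']; case: y' => [[|[|[|[|[|m']]]]] Hm']; try by vm_compute.
Qed.

Definition lastopt (y : seq bool) : option bool :=
  if y is x :: s then Some (last x s) else None.

Lemma lastopt_rcons y l : lastopt (rcons y l) = Some l.
Proof. by case: y => [|x s] //=; rewrite last_rcons. Qed.

Lemma gw_rcons y l : gw (rcons y l) = stepG l (gw y).
Proof. by rewrite /gw foldl_rcons. Qed.

Lemma shape_gw y : shp (lastopt y) (rv (gw y)).
Proof.
elim/last_ind: y => [|y l IH].
  by rewrite /= /red /= mulr0z mulr0 addr0.
by rewrite lastopt_rcons gw_rcons rv_step; apply: shape_step IH.
Qed.

Lemma cross_neq0_shape y z : lastopt y != lastopt z -> crossG (gw y) (gw z) != (0,0).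
Proof.
move=> H; apply/eqP => E.
have := shape_cross _ _ _ _ H (shape_gw y) (shape_gw z).
by rewrite /rv /= -red_cross E /red /=.
Qed.

Lemma crossG_neq0 y z : y != z -> crossG (gw y) (gw z) != (0,0).
Proof.
elim/last_ind: y z => [|y l IH] z.
  case/lastP: z => [|z l'] //= _; apply: cross_neq0_shape.
  by rewrite lastopt_rcons.
case/lastP: z => [|z l'] Hne.
  by apply: cross_neq0_shape; rewrite lastopt_rcons.
have [El|Hl] := eqVneq l l'; last first.
  by apply: cross_neq0_shape; rewrite !lastopt_rcons; apply: contra Hl => /eqP [->].
subst l'.
have Hyz : y != z by apply/negP => /eqP Eyz; move/negP: Hne; apply; rewrite Eyz.
rewrite !gw_rcons cross_step.
move: (IH z Hyz); case: (crossG (gw y) (gw z)) => p q.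
rewrite /= !xpair_eqE => Hpq; apply: contra Hpq.
by rewrite !mulf_eq0 => /andP [/orP [//|->] /orP [//|->]].
Qed.

Set Implicit Arguments. Unset Strict Implicit. Unset Printing Implicit Defensive.

Definition mx2 (C : numClosedFieldType) (a b c d : C) : 'M[C]_2 :=
  \matrix_(i, j) if (i : nat) == 0%N then (if (j : nat) == 0%N then a else b)
                 else (if (j : nat) == 0%N then c else d).
Definition cv2 (C : numClosedFieldType) (a b : C) : 'cV[C]_2 :=
  \col_i if (i : nat) == 0%N then a else b.

Lemma mx2_mul (C : numClosedFieldType) (a b c d a' b' c' d' : C) :
  mx2 a b c d *m mx2 a' b' c' d' =
  mx2 (a*a' + b*c') (a*b' + b*d') (c*a' + d*c') (c*b' + d*d').
Proof.
apply/matrixP => i j; rewrite !mxE !big_ord_recl !big_ord0 !addr0 !mxE.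
by case: i => [[|[|?]] ?]; case: j => [[|[|?]] ?].
Qed.

Lemma mx2_cv (C : numClosedFieldType) (a b c d x y : C) :
  mx2 a b c d *m cv2 x y = cv2 (a*x + b*y) (c*x + d*y).
Proof.
apply/matrixP => i j; rewrite !mxE !big_ord_recl !big_ord0 !addr0 !mxE.
by case: i => [[|[|?]] ?].
Qed.

Lemma adj_mx2 (C : numClosedFieldType) (a b c d : C) :
  adjmx (mx2 a b c d) = mx2 a^* c^* b^* d^*.
Proof.
apply/matrixP => i j; rewrite !mxE.
by case: i => [[|[|?]] ?]; case: j => [[|[|?]] ?].
Qed.

Lemma mx2_one (C : numClosedFieldType) : 1%:M = mx2 (1 : C) 0 0 1.
Proof.
apply/matrixP => i j; rewrite !mxE.
by case: i => [[|[|?]] ?]; case: j => [[|[|?]] ?].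
Qed.

Lemma cv2_eta (C : numClosedFieldType) (v : 'cV[C]_2) :
  v = cv2 (v ord0 ord0) (v ord_max ord0).
Proof.
apply/matrixP => i j; rewrite !mxE; rewrite [j]ord1.
case: i => [[|[|?]] ?] //=; congr (v _ _); exact: val_inj.
Qed.

Lemma cv2_0 (C : numClosedFieldType) (a b : C) : cv2 a b ord0 ord0 = a.
Proof. by rewrite mxE. Qed.
Lemma cv2_1 (C : numClosedFieldType) (a b : C) : cv2 a b ord_max ord0 = b.
Proof. by rewrite mxE. Qed.

Lemma adjmxM (C : numClosedFieldType) (A B : 'M[C]_2) :
  adjmx (A *m B) = adjmx B *m adjmx A.
Proof.
apply/matrixP => i j; rewrite !mxE rmorph_sum; apply: eq_bigr => k _.
by rewrite !mxE rmorphM mulrC.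
Qed.

Lemma adjmxK (C : numClosedFieldType) (A : 'M[C]_2) : adjmx (adjmx A) = A.
Proof. by apply/matrixP => i j; rewrite !mxE conjCK. Qed.

Lemma ii (C : numClosedFieldType) : 'i * 'i = -1 :> C.
Proof. by rewrite -expr2 sqrCi. Qed.

Definition emb (C : numClosedFieldType) (u : G) : C := u.1%:~R + u.2%:~R * 'i.

Lemma emb_cross (C : numClosedFieldType) u v :
  emb C (crossG u v) = emb C u.1 * emb C v.2 - emb C u.2 * emb C v.1.
Proof.
rewrite /emb /crossG /gmul /gsub /= !(intrD, intrB, intrM).
apply/eqP; rewrite -subr_eq0; apply/eqP.
transitivity (('i*'i+1) * (- u.1.2%:~R*v.2.2%:~R + u.2.2%:~R * v.1.2%:~R) : C).
  ring.
by rewrite ii addNr mul0r.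
Qed.

Lemma emb_step (C : numClosedFieldType) l u :
  (emb C (stepG l u).1, emb C (stepG l u).2) =
  if l then (3 * emb C u.1 + 4 * 'i * emb C u.2, 4 * 'i * emb C u.1 + 3 * emb C u.2)
  else (3 * emb C u.1 - 4 * emb C u.2, 4 * emb C u.1 + 3 * emb C u.2).
Proof.
rewrite /emb /stepG; case: l => /=; rewrite !(intrD, intrB, intrM); congr pair.
- apply/eqP; rewrite -subr_eq0; apply/eqP.
  transitivity (('i*'i+1) * (- 4 * u.2.2%:~R) : C); first ring.
  by rewrite ii addNr mul0r.
- apply/eqP; rewrite -subr_eq0; apply/eqP.
  transitivity (('i*'i+1) * (- 4 * u.1.2%:~R) : C); first ring.
  by rewrite ii addNr mul0r.
- ring.
- ring.
Qed.

Lemma emb_eq0 (C : numClosedFieldType) u : emb C u = 0 -> u = (0,0).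
Proof.
case: u => p q; rewrite /emb /= mulrC => H.
have Hp := Re_rect (realz C p) (realz C q).
have Hq := Im_rect (realz C p) (realz C q).
rewrite H in Hp Hq.
have R1 := Re_rect (real0 C) (real0 C).
have R2 := Im_rect (real0 C) (real0 C).
rewrite mulr0 addr0 in R1 R2.
rewrite R1 in Hp; rewrite R2 in Hq; move: Hp Hq.
move/esym/eqP; rewrite intr_eq0 => /eqP ->.
by move/esym/eqP; rewrite intr_eq0 => /eqP ->.
Qed.

Lemma conjM (C : numClosedFieldType) (x y : C) : (x * y)^* = x^* * y^*.
Proof. exact: rmorphM. Qed.
Lemma conjD (C : numClosedFieldType) (x y : C) : (x + y)^* = x^* + y^*.
Proof. exact: rmorphD. Qed.
Lemma conjB (C : numClosedFieldType) (x y : C) : (x - y)^* = x^* - y^*.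
Proof. exact: rmorphB. Qed.
Lemma conjN (C : numClosedFieldType) (x : C) : (- x)^* = - x^*.
Proof. exact: rmorphN. Qed.

Definition sc (C : numClosedFieldType) : C := 5^-1.

Lemma sc_conj (C : numClosedFieldType) : (sc C)^* = sc C.
Proof. by apply: conj_Creal; rewrite realV realn. Qed.

Lemma sc25 (C : numClosedFieldType) : 25 * sc C * sc C = 1.
Proof.
by rewrite /sc; field.
Qed.

Lemma sc_neq0 (C : numClosedFieldType) : sc C != 0.
Proof. by rewrite /sc invr_eq0 pnatr_eq0. Qed.

Definition UA (C : numClosedFieldType) : 'M[C]_2 :=
  mx2 (3 * sc C) (- (4 * sc C)) (4 * sc C) (3 * sc C).
Definition UB (C : numClosedFieldType) : 'M[C]_2 :=
  mx2 (3 * sc C) (4 * sc C * 'i) (4 * sc C * 'i) (3 * sc C).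

Definition Mb (C : numClosedFieldType) : mcqfa2 C :=
  MCQFA2 (UA C) (UB C) (cv2 1 0) set0.

Lemma conj3 (C : numClosedFieldType) : (3 : C)^* = 3. Proof. exact: conjC_nat. Qed.
Lemma conj4 (C : numClosedFieldType) : (4 : C)^* = 4. Proof. exact: conjC_nat. Qed.

Lemma UA_unit (C : numClosedFieldType) : Defs.unitarymx (UA C).
Proof.
rewrite /Defs.unitarymx /UA adj_mx2 mx2_mul mx2_one.
rewrite !(conjM, conjN) sc_conj conj3 conj4.
congr mx2.
- by apply: etrans (sc25 C); ring.
- ring.
- ring.
- by apply: etrans (sc25 C); ring.
Qed.

Lemma UB_unit (C : numClosedFieldType) : Defs.unitarymx (UB C).
Proof.
rewrite /Defs.unitarymx /UB adj_mx2 mx2_mul mx2_one.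
rewrite !(conjM, conjN) sc_conj conj3 conj4 conjCi.
congr mx2.
- apply: etrans (sc25 C).
  transitivity ((9 - 16 * ('i * 'i)) * sc C * sc C); first ring.
  rewrite ii; ring.
- ring.
- ring.
- apply: etrans (sc25 C).
  transitivity ((9 - 16 * ('i * 'i)) * sc C * sc C); first ring.
  rewrite ii; ring.
Qed.

Lemma step_emb (C : numClosedFieldType) l (k : C) u :
  letter_mx (Mb C) l *m cv2 (k * emb C u.1) (k * emb C u.2) =
  cv2 (k * sc C * emb C (stepG l u).1) (k * sc C * emb C (stepG l u).2).
Proof.
have := emb_step C l u.
case: l => -[-> ->]; rewrite /letter_mx /= mx2_cv; congr cv2; ring.
Qed.

Lemma fs_gen (C : numClosedFieldType) y (k : C) u :
  foldl (fun v c => letter_mx (Mb C) c *m v) (cv2 (k * emb C u.1) (k * emb C u.2)) y =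
  cv2 (k * sc C ^+ size y * emb C (foldl (fun u l => stepG l u) u y).1)
      (k * sc C ^+ size y * emb C (foldl (fun u l => stepG l u) u y).2).
Proof.
elim: y k u => [|l y IH] k u /=; first by rewrite !expr0 !mulr1.
by rewrite step_emb IH exprS !mulrA.
Qed.

Lemma fs_base (C : numClosedFieldType) y :
  final_state (Mb C) y =
  cv2 (sc C ^+ size y * emb C (gw y).1) (sc C ^+ size y * emb C (gw y).2).
Proof.
rewrite /final_state.
have -> : u0 (Mb C) = cv2 (1 * emb C (((1,0),(0,0)) : G * G).1) (1 * emb C (((1,0),(0,0)) : G*G).2).
  by rewrite /emb /= !mulr0z mul0r !addr0 !mul1r.
by rewrite fs_gen !mul1r.
Qed.

Definition nrm (C : numClosedFieldType) (v : 'cV[C]_2) : C :=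
  `|v ord0 ord0| ^+ 2 + `|v ord_max ord0| ^+ 2.

Lemma nrm_step (C : numClosedFieldType) l (v : 'cV[C]_2) :
  nrm (letter_mx (Mb C) l *m v) = nrm v.
Proof.
rewrite [in LHS](cv2_eta v) /nrm.
set a := v ord0 ord0; set b := v ord_max ord0.
case: l; rewrite /letter_mx /= mx2_cv !cv2_0 !cv2_1 !normCK
  2!conjD !(conjM, conjN) !conj3 !conj4 !sc_conj ?conjCi.
- transitivity ((9 - 16 * ('i * 'i)) * sc C * sc C * (a * a^* + b * b^*)); first ring.
  rewrite ii; have -> : (9 - 16 * -1 : C) = 25 by ring.
  by rewrite sc25 mul1r.
- transitivity (25 * sc C * sc C * (a * a^* + b * b^*)); first ring.
  by rewrite sc25 mul1r.
Qed.

Lemma nrm_fs (C : numClosedFieldType) y : nrm (final_state (Mb C) y) = 1.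
Proof.
rewrite /final_state.
have : nrm (u0 (Mb C)) = 1.
  by rewrite /nrm /= cv2_0 cv2_1 normr1 normr0 expr1n expr0n addr0.
elim: y (u0 (Mb C)) => [|l y IH] w //= Hw.
by apply: IH; rewrite nrm_step.
Qed.

Lemma unitary_conj (C : numClosedFieldType) (V U : 'M[C]_2) :
  Defs.unitarymx V -> Defs.unitarymx U -> Defs.unitarymx (V *m U *m adjmx V).
Proof.
rewrite /Defs.unitarymx => HV HU.
have VV : adjmx V *m V = 1%:M by apply: mulmx1C.
rewrite !adjmxM adjmxK !mulmxA -(mulmxA (V *m U)) VV mulmx1.
by rewrite -(mulmxA V) HU mulmx1 HV.
Qed.

Lemma fold_conj (C : numClosedFieldType) (V : 'M[C]_2) (M M' : mcqfa2 C) :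
  adjmx V *m V = 1%:M ->
  (forall l, letter_mx M' l = V *m letter_mx M l *m adjmx V) ->
  forall y (w : 'cV[C]_2),
  foldl (fun v c => letter_mx M' c *m v) (V *m w) y =
  V *m foldl (fun v c => letter_mx M c *m v) w y.
Proof.
move=> VV HL; elim=> [|l y IH] w //=.
rewrite -IH; congr foldl.
by rewrite HL !mulmxA -(mulmxA _ (adjmx V) V) VV mulmx1.
Qed.

Unset Implicit Arguments.
Theorem mainTheorem14 (C : numClosedFieldType) (x : seq letter) :
  exists M : mcqfa2 C,
    wf_mcqfa2 M /\ nd_recognizes M (fun y => y <> x).
Proof.
set a := final_state (Mb C) x ord0 ord0.
set b := final_state (Mb C) x ord_max ord0.
have hab : a * a^* + b * b^* = 1.
  by rewrite -!normCK; have := nrm_fs C x; rewrite /nrm.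
pose V := mx2 a^* b^* (-b) a.
have HV : Defs.unitarymx V.
  rewrite /Defs.unitarymx /V adj_mx2 mx2_mul mx2_one !conjCK conjN.
  congr mx2.
  - by rewrite -hab; ring.
  - ring.
  - ring.
  - by rewrite -hab; ring.
have VV : adjmx V *m V = 1%:M by apply: mulmx1C.
exists (MCQFA2 (V *m UA C *m adjmx V) (V *m UB C *m adjmx V) (V *m cv2 1 0) [set ord_max]).
have Hfs : forall y, final_state (MCQFA2 (V *m UA C *m adjmx V) (V *m UB C *m adjmx V)
      (V *m cv2 1 0) [set ord_max]) y = V *m final_state (Mb C) y.
  move=> y; rewrite /final_state /=.
  by apply: (fold_conj VV); case.
have Hacc : forall y, acc_prob (MCQFA2 (V *m UA C *m adjmx V) (V *m UB C *m adjmx V)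
      (V *m cv2 1 0) [set ord_max]) y =
      `| sc C ^+ size x * sc C ^+ size y * emb C (crossG (gw x) (gw y)) | ^+ 2.
  move=> y; rewrite /acc_prob /= big_set1 Hfs.
  rewrite {1}(fs_base C y) /V mx2_cv cv2_1.
  rewrite /a /b !fs_base cv2_0 cv2_1 emb_cross.
  congr (`| _ | ^+ 2); ring.
split.
  split.
  - exact: unitary_conj HV (UA_unit C).
  - exact: unitary_conj HV (UB_unit C).
  - rewrite !big_ord_recl big_ord0 addr0 mx2_cv.
    rewrite !mxE /=.
    rewrite !mulr1 !mulr0 !addr0 norm_conjC normrN !normCK.
    exact: hab.
move=> y; split.
  move=> Hyx; rewrite Hacc sqrf_eq0 normr_eq0 !mulf_eq0 !expf_eq0 (negbTE (sc_neq0 C)) !andbF /=.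
  apply/negP => /eqP/emb_eq0 E.
  have : x != y by apply/eqP => Exy; apply: Hyx.
  by move/crossG_neq0; rewrite E eqxx.
move=> Hyx; have [Exy|Hne] := eqVneq y x; last first.
  by exfalso; apply: Hyx => E; rewrite E eqxx in Hne.
rewrite Exy.
rewrite Hacc.
have -> : crossG (gw x) (gw x) = (0,0).
  by rewrite /crossG /gmul /gsub /=; congr pair; ring.
by rewrite /emb /= mulr0z mul0r addr0 mulr0 normr0 expr0n.
Qed.
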